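(* Let $k\ge1$ and consider the Poisson mixture on $\{0,1,2,\dots\}$ $$f(x\mid\lambda,\boldsymbol\gamma,\mathbf p)=\frac{1}{x!}\sum_{i=1}^k p_i\,\lambda_i^x e^{-\lambda_i},\qquad \lambda_i=\frac{\lambda\gamma_i}{p_i},$$ where $\lambda>0$, $\mathbf p=(p_1,\dots,p_k)$ with $p_i>0$, $\sum_i p_i=1$, and $\boldsymbol\gamma=(\gamma_1,\dots,\gamma_k)$ with $\gamma_i>0$, $\sum_i\gamma_i=1$ (so that $\lambda=\sum_i p_i\lambda_i$ is the mean of the mixture). Put the prior $\lambda^{-1}\,\mathrm d\lambda\times\pi_0(\mathrm d(\boldsymbol\gamma,\mathbf p))$ where $\pi_0$ is any proper probability distribution not depending on $\lambda$. Then for any sample $x_1,\dots,x_n\in\{0,1,2,\dots\}$ containing at least one strictly positive observation, the posterior distribution is proper, i.e. $0<\int\prod_{j=1}^n f(x_j\mid\lambda,\boldsymbol\gamma,\mathbf p)\,\lambda^{-1}\mathrm d\lambda\,\pi_0(\mathrm d(\boldsymbol\gamma,\mathbf p))<\infty$.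
   Context: A posterior is proper when likelihood times prior has finite positive total integral over the parameter space. *)

(* Defs.v *)
From HB Require Import structures.
From mathcomp Require Import all_boot all_order all_algebra.
From mathcomp Require Import all_classical all_reals all_analysis.
Set Implicit Arguments. Unset Strict Implicit. Unset Printing Implicit Defensive.
Import Order.TTheory GRing.Theory Num.Theory.
Local Open Scope ring_scope.

Definition poisson_mix {R : realType} (k : nat) (lam : R) (gam p : 'I_k -> R)
  (x : nat) : R :=
  (x`!%:R)^-1 * \sum_(i < k)
     p i * (lam * gam i / p i) ^+ x * expR (- (lam * gam i / p i)).

Definition mix_lik {R : realType} (k : nat) (lam : R) (gam p : 'I_k -> R)
  (n : nat) (xs : 'I_n -> nat) : R :=
  \prod_(j < n) poisson_mix lam gam p (xs j).

Definition in_simplex {R : realType} (k : nat) (v : 'I_k -> R) : Prop :=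
  (forall i, 0 < v i) /\ \sum_(i < k) v i = 1.

(* Main.v *)
Require Import Defs.
From HB Require Import structures.
From mathcomp Require Import all_boot all_order all_algebra.
From mathcomp Require Import all_classical all_reals all_analysis.
From mathcomp Require Import measurable_realfun exponential_distribution.
From mathcomp Require Import ring lra.
Import Order.TTheory GRing.Theory Num.Theory.
Local Open Scope ring_scope.
Local Open Scope classical_set_scope.

Section pointwise.
Variable R : realType.

Definition G (x : nat) (u : R) := u ^+ x * expR (- u).

Lemma pmE k (lam : R) (gam p : 'I_k -> R) x : poisson_mix lam gam p x =
  (x`!%:R)^-1 * \sum_(i < k) p i * G x (lam * gam i / p i).
Proof. by rewrite /poisson_mix; congr (_ * _); apply: eq_bigr => i _; rewrite /G mulrA. Qed.

Lemma G_ge0 x (u : R) : 0 <= u -> 0 <= G x u.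
Proof. by move=> u0; rewrite /G mulr_ge0 ?exprn_ge0 ?expR_ge0. Qed.

Lemma pow_le_fact_exp x (u : R) : 0 <= u -> u ^+ x <= x`!%:R * expR u.
Proof.
move=> u0; case: x => [|m].
  by rewrite expr0 fact0 mul1r; apply: le_trans (expR_ge1Dx u); rewrite lerDl.
have := expR_ge1Dxn m u0.
have hf : 0 < (m.+1)`!%:R :> R by rewrite ltr0n fact_gt0.
move=> h; rewrite -ler_pdivrMl // mulrC; apply: le_trans h; rewrite lerDr //.
Qed.

Lemma G_le_fact x (u : R) : 0 <= u -> G x u <= x`!%:R.
Proof.
move=> u0; rewrite /G.
have h := ler_wpM2r (expR_ge0 (- u)) (pow_le_fact_exp x u u0).
apply: (le_trans h).
by rewrite -mulrA -expRD subrr expR0 mulr1.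
Qed.

Lemma c_pos k (gam p : 'I_k -> R) i : in_simplex gam -> in_simplex p ->
  0 < gam i / p i.
Proof. by move=> [g0 _] [p0 _]; rewrite divr_gt0. Qed.

Lemma arg_pos k (gam p : 'I_k -> R) i (lam : R) : in_simplex gam -> in_simplex p ->
  0 <= lam -> 0 <= lam * gam i / p i.
Proof. by move=> sg sp l0; rewrite -mulrA mulr_ge0 // ltW // c_pos. Qed.

Lemma pm_ge0 k (lam : R) (gam p : 'I_k -> R) x : in_simplex gam -> in_simplex p ->
  0 <= lam -> 0 <= poisson_mix lam gam p x.
Proof.
move=> sg sp l0; rewrite pmE mulr_ge0 ?invr_ge0 ?ler0n //.
apply: sumr_ge0 => i _; rewrite mulr_ge0 ?G_ge0 ?arg_pos //.
by case: sp => p0 _; rewrite ltW.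
Qed.

Lemma pm_le1 k (lam : R) (gam p : 'I_k -> R) x : in_simplex gam -> in_simplex p ->
  0 <= lam -> poisson_mix lam gam p x <= 1.
Proof.
move=> sg sp l0; rewrite pmE.
have hf : 0 < x`!%:R :> R by rewrite ltr0n fact_gt0.
rewrite ler_pdivrMl // mulr1.
apply: le_trans (_ : \sum_(i < k) p i * x`!%:R <= _).
  apply: ler_sum => i _; apply: ler_wpM2l; first by case: sp => p0 _; rewrite ltW.
  by apply: G_le_fact; rewrite arg_pos.
by rewrite -mulr_suml; case: sp => _ ->; rewrite mul1r.
Qed.

Lemma lik_ge0 k (lam : R) (gam p : 'I_k -> R) n (xs : 'I_n -> nat) :
  in_simplex gam -> in_simplex p -> 0 <= lam -> 0 <= mix_lik lam gam p xs.
Proof. by move=> sg sp l0; apply: prodr_ge0 => j _; exact: pm_ge0. Qed.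

Lemma lik_le_pm k (lam : R) (gam p : 'I_k -> R) n (xs : 'I_n -> nat) j0 :
  in_simplex gam -> in_simplex p -> 0 <= lam ->
  mix_lik lam gam p xs <= poisson_mix lam gam p (xs j0).
Proof.
move=> sg sp l0; rewrite /mix_lik (bigD1 j0) //=.
rewrite -[leRHS]mulr1; apply: ler_wpM2l; first exact: pm_ge0.
by apply: prodr_ile1 => j _; rewrite pm_ge0 ?pm_le1.
Qed.


Lemma p_le1 k (p : 'I_k -> R) i : in_simplex p -> p i <= 1.
Proof.
move=> [p0 <-]; rewrite (bigD1 i) //= lerDl; apply: sumr_ge0 => j _; exact: ltW.
Qed.

Lemma Gbound m (c lam : R) : 0 < c -> 0 < lam ->
  G m.+1 (lam * c) / lam <= (2 ^+ m.+1 * m`!%:R) * exponential_pdf (c / 2) lam.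
Proof.
move=> c0 l0; rewrite exponential_pdfE; last exact: ltW.
set u := lam * c.
have u0 : 0 < u by rewrite mulr_gt0.
have lne : lam != 0 by rewrite gt_eqF.
have e1 : G m.+1 u / lam = c * (u ^+ m * expR (- u)).
  by rewrite /G exprS /u; field.
have h2 : u ^+ m <= 2 ^+ m * m`!%:R * expR (u / 2).
  have := pow_le_fact_exp m (u / 2) (ltW (divr_gt0 u0 (ltr0Sn R 1))).
  have -> : u ^+ m = 2 ^+ m * (u / 2) ^+ m by rewrite -exprMn; congr (_ ^+ _); field.
  move=> h; rewrite -mulrA; apply: ler_wpM2l => //; exact: exprn_ge0.
have e2 : expR (u / 2) * expR (- u) = expR (- (c / 2) * lam).
  by rewrite -expRD; congr expR; rewrite /u; field.
rewrite e1.
apply: (@le_trans _ _ (c * ((2 ^+ m * m`!%:R * expR (u / 2)) * expR (- u)))).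
  apply: ler_wpM2l; first exact: ltW.
  by apply: ler_wpM2r => //; exact: expR_ge0.
have -> : c * (2 ^+ m * m`!%:R * expR (u / 2) * expR (- u)) =
  2 ^+ m.+1 * m`!%:R * (c / 2 * (expR (u / 2) * expR (- u))).
  by rewrite exprS; field.
by rewrite e2.
Qed.

Lemma G_lb x (u : R) : 1 <= u <= 2 -> expR (-2) <= G x u.
Proof.
move=> /andP[u1 u2]; rewrite /G -[expR (-2)]mul1r.
apply: ler_pM; rewrite ?expR_ge0 ?ler01 //.
  by rewrite exprn_ege1.
by rewrite ler_expR lerN2.
Qed.

Lemma pm_lb k (lam : R) (gam p : 'I_k -> R) x i0 :
  in_simplex gam -> in_simplex p -> 0 <= lam -> (k%:R)^-1 <= p i0 ->
  1 <= lam * (gam i0 / p i0) <= 2 ->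
  (x`!%:R)^-1 * ((k%:R)^-1 * expR (-2)) <= poisson_mix lam gam p x.
Proof.
move=> sg sp l0 pk hu; rewrite pmE; apply: ler_wpM2l; first by rewrite invr_ge0 ler0n.
rewrite (bigD1 i0) //=.
apply: (@le_trans _ _ (p i0 * G x (lam * gam i0 / p i0))).
  apply: ler_pM; rewrite ?mulr_ge0 ?invr_ge0 ?ler0n ?expR_ge0 //.
  by apply: G_lb; rewrite -mulrA.
rewrite lerDl; apply: sumr_ge0 => i _; rewrite mulr_ge0 ?G_ge0 ?arg_pos //.
by case: sp => p0 _; rewrite ltW.
Qed.

Lemma lik_lb k (lam : R) (gam p : 'I_k -> R) n (xs : 'I_n -> nat) i0 :
  in_simplex gam -> in_simplex p -> 0 <= lam -> (k%:R)^-1 <= p i0 ->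
  1 <= lam * (gam i0 / p i0) <= 2 ->
  \prod_(j < n) (((xs j)`!%:R)^-1 * ((k%:R)^-1 * expR (-2))) <= mix_lik lam gam p xs.
Proof.
move=> sg sp l0 pk hu; apply: ler_prod => j _; apply/andP; split.
  by rewrite mulr_ge0 ?invr_ge0 ?ler0n ?mulr_ge0 ?expR_ge0.
exact: (@pm_lb k lam gam p (xs j) i0 sg sp l0 pk hu).
Qed.

Lemma exists_big k (hk : (0 < k)%N) (p : 'I_k -> R) : \sum_(i < k) p i = 1 ->
  exists i, (k%:R)^-1 <= p i.
Proof.
move=> ps; apply: contrapT => /forallNP h.
have : \sum_(i < k) p i < \sum_(i < k) (k%:R)^-1.
  apply: ltr_sum; first by apply/hasP; exists (Ordinal hk); rewrite ?mem_index_enum.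
  by move=> i _; rewrite ltNge; apply/negP => /h.
rewrite ps sumr_const card_ord -[_ *+ _]mulr_natr mulVf ?ltxx //.
by rewrite pnatr_eq0 -lt0n.
Qed.

End pointwise.
Arguments G {R}.

Section integrals.
Variable R : realType.
Local Notation mu := (@lebesgue_measure R).

Lemma meas_lik k (gam p : 'I_k -> R) n (xs : 'I_n -> nat) :
  measurable_fun setT (fun lam : R => mix_lik lam gam p xs).
Proof.
rewrite /mix_lik /poisson_mix.
apply: measurable_prod => j _.
apply: measurable_funM; first exact: measurable_cst.
apply: measurable_sum => i.
apply: measurable_funM.
  apply: measurable_funM; first exact: measurable_cst.
  apply: measurable_funX.
  apply: measurable_funM; last exact: measurable_cst.
  by apply: measurable_funM; [exact: measurable_id | exact: measurable_cst].
apply: measurableT_comp; first exact: measurable_expR.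
apply: measurable_funN.
apply: measurable_funM; last exact: measurable_cst.
by apply: measurable_funM; [exact: measurable_id | exact: measurable_cst].
Qed.

Lemma meas_inv : measurable_fun (`]0%R, +oo[%classic : set R) (fun lam : R => lam^-1).
Proof.
apply: open_continuous_measurable_fun; first exact: interval_open.
move=> x; rewrite inE /= in_itv /= andbT => x0.
by apply: inv_continuous; rewrite gt_eqF.
Qed.

Lemma meas_integrand k (gam p : 'I_k -> R) n (xs : 'I_n -> nat) :
  measurable_fun (`]0%R, +oo[%classic : set R)
    (fun lam : R => (mix_lik lam gam p xs / lam)%:E).
Proof.
apply/measurable_EFinP; apply: measurable_funM; last exact: meas_inv.
apply: measurable_funTS; exact: meas_lik.
Qed.


Lemma pointwise_ub k (gam p : 'I_k -> R) n (xs : 'I_n -> nat) j0 m (lam : R) :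
  in_simplex gam -> in_simplex p -> xs j0 = m.+1 -> 0 < lam ->
  mix_lik lam gam p xs / lam <=
  (2 ^+ m.+1 * m`!%:R) * \sum_(i < k) exponential_pdf (gam i / p i / 2) lam.
Proof.
move=> sg sp hx l0.
have li : 0 <= lam^-1 by rewrite invr_ge0 ltW.
apply: (@le_trans _ _ (poisson_mix lam gam p (xs j0) / lam)).
  by apply: ler_wpM2r => //; apply: lik_le_pm => //; exact: ltW.
rewrite pmE hx.
set S := \sum_(i < k) _.
have S0 : 0 <= S.
  apply: sumr_ge0 => i _; apply: mulr_ge0; first by case: sp => p0 _; exact: ltW.
  by apply: G_ge0; apply: arg_pos => //; exact: ltW.
apply: (@le_trans _ _ (S / lam)).
  apply: ler_wpM2r => //; rewrite -[leRHS]mul1r; apply: ler_wpM2r => //.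
  by rewrite invf_le1 ?ltr0n ?fact_gt0 // ler1n fact_gt0.
rewrite /S mulr_suml mulr_sumr; apply: ler_sum => i _.
apply: (@le_trans _ _ (G m.+1 (lam * (gam i / p i)) / lam)).
  rewrite mulrA; apply: ler_wpM2r => //; rewrite -[leRHS]mul1r.
  apply: ler_wpM2r; first by rewrite G_ge0 // arg_pos // ltW.
  exact: p_le1.
apply: Gbound => //; exact: c_pos.
Qed.

Lemma inner_ub k (gam p : 'I_k -> R) n (xs : 'I_n -> nat) j0 m :
  in_simplex gam -> in_simplex p -> xs j0 = m.+1 ->
  (\int[mu]_(lam in `]0%R, +oo[%classic) (mix_lik lam gam p xs / lam)%:E <=
  ((2 ^+ m.+1 * m`!%:R) * k%:R)%:E)%E.
Proof.
move=> sg sp hx.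
set B := 2 ^+ m.+1 * m`!%:R.
have B0 : 0 <= B by rewrite /B mulr_ge0 ?exprn_ge0 ?ler0n.
have cp i : 0 < gam i / p i / 2 by rewrite divr_gt0 ?c_pos.
have H1 : (\int[mu]_(lam in `]0%R, +oo[%classic) (mix_lik lam gam p xs / lam)%:E <=
  \int[mu]_(lam in `]0%R, +oo[%classic)
    (B%:E * (\sum_(i < k) (exponential_pdf (gam i / p i / 2) lam)%:E)))%E.
  apply: ge0_le_integral => //.
  - move=> x; rewrite /= in_itv /= andbT => x0.
    by rewrite lee_fin mulr_ge0 ?lik_ge0 ?invr_ge0 ?ltW.
  - exact: meas_integrand.
  - apply: emeasurable_funM; first exact: measurable_cst.
    apply: emeasurable_sum => i; apply/measurable_EFinP.
    apply: measurable_funTS; exact: measurable_exponential_pdf.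
  - move=> x; rewrite /= in_itv /= andbT => x0.
    rewrite sumEFin -EFinM lee_fin; exact: (@pointwise_ub k gam p n xs j0 m x sg sp hx x0).
apply: (le_trans H1).
rewrite ge0_integralZl //; last first.
- by move=> x _; apply: sume_ge0 => i _; rewrite lee_fin exponential_pdf_ge0 // ltW.
- apply: emeasurable_sum => i; apply/measurable_EFinP.
  apply: measurable_funTS; exact: measurable_exponential_pdf.
rewrite ge0_integral_sum //; last first.
- by move=> i x _; rewrite lee_fin exponential_pdf_ge0 // ltW.
- move=> i; apply/measurable_EFinP.
  apply: measurable_funTS; exact: measurable_exponential_pdf.
rewrite EFinM; apply: lee_wpmul2l; first by rewrite lee_fin.
apply: (@le_trans _ _ (\sum_(i < k) 1%E)).
  apply: lee_sum => i _.
  rewrite -(integral_exponential_pdf (cp i)).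
  apply: ge0_subset_integral => //.
  - apply/measurable_EFinP; exact: measurable_exponential_pdf.
  - by move=> x _; rewrite lee_fin exponential_pdf_ge0 // ltW.
by rewrite sumEFin sumr_const card_ord -mulr_natr mul1r.
Qed.


Lemma inner_lb k (gam p : 'I_k -> R) n (xs : 'I_n -> nat) i0 :
  in_simplex gam -> in_simplex p -> (k%:R)^-1 <= p i0 ->
  (((\prod_(j < n) (((xs j)`!%:R)^-1 * ((k%:R)^-1 * expR (-2)))) / 2)%:E <=
  \int[mu]_(lam in `]0%R, +oo[%classic) (mix_lik lam gam p xs / lam)%:E)%E.
Proof.
move=> sg sp pk.
set K0 := \prod_(j < n) _.
have K00 : 0 <= K0.
  by apply: prodr_ge0 => j _; rewrite mulr_ge0 ?invr_ge0 ?ler0n ?mulr_ge0 ?expR_ge0.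
set c := gam i0 / p i0.
have c0 : 0 < c by exact: c_pos.
have cne : c != 0 by rewrite gt_eqF.
have ci0 : 0 < c^-1 by rewrite invr_gt0.
set a := c^-1. set b := 2 * c^-1.
have sub : (`[a, b]%classic : set R) `<=` `]0%R, +oo[%classic.
  move=> x /=; rewrite !in_itv /= andbT => /andP[h _]; exact: lt_le_trans h.
have H2 : (\int[mu]_(lam in `[a, b]%classic) (mix_lik lam gam p xs / lam)%:E <=
   \int[mu]_(lam in `]0%R, +oo[%classic) (mix_lik lam gam p xs / lam)%:E)%E.
  apply: ge0_subset_integral => //.
  - exact: meas_integrand.
  - move=> x; rewrite /= in_itv /= andbT => x0.
    by rewrite lee_fin mulr_ge0 ?lik_ge0 ?invr_ge0 ?ltW.
apply: le_trans H2.
have H3 : (\int[mu]_(lam in `[a, b]%classic) (cst ((K0 * c / 2)%R)%:E lam) <=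
   \int[mu]_(lam in `[a, b]%classic) (mix_lik lam gam p xs / lam)%:E)%E.
  apply: ge0_le_integral => //.
  - by move=> x _; rewrite lee_fin divr_ge0 // mulr_ge0 //; exact: ltW.
  - apply: (measurable_funS _ sub) => //; exact: meas_integrand.
  - move=> x; rewrite /= in_itv /= => /andP[h1 h2].
    have x0 : 0 < x by exact: lt_le_trans h1.
    have xc1 : 1 <= x * c.
      by have hc := mulfV cne; rewrite /a in h1; nra.
    have xc2 : x * c <= 2.
      by have hc := mulfV cne; rewrite /b in h2; nra.
    rewrite /cst /= lee_fin -(mulrA K0); apply: ler_pM => //.
    + by rewrite divr_ge0 //; exact: ltW.
    + apply: (@lik_lb R k x gam p n xs i0 sg sp (ltW x0) pk).
      by rewrite xc1 xc2.
    + by rewrite -(ler_pM2l x0) mulfV ?gt_eqF // mulrA ler_pdivrMr // mul1r.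
apply: le_trans H3.
rewrite integral_cst //= lebesgue_measure_itv /= lte_fin.
have -> : a < b by rewrite /a /b; rewrite ltr_pMl // ltr1n.
rewrite /= -EFinB -EFinM lee_fin le_eqVlt; apply/orP; left; apply/eqP.
by rewrite /b /a; field.
Qed.

End integrals.

Section outer.
Local Open Scope ereal_scope.

Lemma outer_lb (R : realType) (d : measure_display) (T : measurableType d)
  (m : {measure set T -> \bar R}) (f : T -> \bar R) (c : R) :
  (0 <= c)%R -> (forall t, c%:E <= f t) -> c%:E * m setT <= \int[m]_t f t.
Proof.
move=> c0 hf; rewrite ge0_integralTE; last by move=> t; exact: le_trans (hf t).
apply: ereal_sup_ubound => /=; exists (cst_nnsfun T (NngNum c0)) => //.
by rewrite -(sintegral_EFin_cst m setT (NngNum c0)) patch_setT.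
Qed.

Lemma outer_ub (R : realType) (d : measure_display) (T : measurableType d)
  (m : {measure set T -> \bar R}) (f : T -> \bar R) (C : R) :
  (0 <= C)%R -> (forall t, 0 <= f t <= C%:E) -> \int[m]_t f t <= C%:E * m setT.
Proof.
move=> C0 hf; rewrite ge0_integralTE; last by move=> t; case/andP: (hf t).
apply: ge_ereal_sup => _ [h /= hh <-].
rewrite -(sintegral_EFin_cst m setT (NngNum C0)) patch_setT.
apply: (le_sintegral m (g := cst_nnsfun T (NngNum C0))) => t /=.
by rewrite -lee_fin; apply: le_trans (hh t) _; case/andP: (hf t).
Qed.

End outer.

Theorem theorem2 (R : realType) (k : nat) (hk : (0 < k)%N)
  (d : measure_display) (T : measurableType d) (pi0 : probability T R)
  (gam p : T -> 'I_k -> R)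
  (gam_meas : forall i, measurable_fun setT (fun t => gam t i))
  (p_meas : forall i, measurable_fun setT (fun t => p t i))
  (gam_simplex : forall t, in_simplex (gam t))
  (p_simplex : forall t, in_simplex (p t))
  (n : nat) (xs : 'I_n -> nat) (hpos : exists j, (0 < xs j)%N) :
  let Z := (\int[pi0]_t
              \int[lebesgue_measure]_(lam in `]0%R, +oo[%classic)
                 ((mix_lik lam (gam t) (p t) xs) / lam)%:E)%E in
  (0 < Z)%E /\ (Z < +oo)%E.
Proof.
move=> Z; have [j0 hj0] := hpos.
have hx : xs j0 = (xs j0).-1.+1 by rewrite prednK.
split.
- set K0 := \prod_(j < n) (((xs j)`!%:R)^-1 * ((k%:R)^-1 * expR (-2))) : R.
  have K0p : 0 < K0.
    apply: prodr_gt0 => j _; apply: mulr_gt0; first by rewrite invr_gt0 ltr0n fact_gt0.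
    by apply: mulr_gt0; [rewrite invr_gt0 ltr0n | exact: expR_gt0].
  apply: (@lt_le_trans _ _ ((K0 / 2)%:E * pi0 setT)%E).
    by rewrite probability_setT mule1 lte_fin divr_gt0.
  apply: outer_lb; first by rewrite divr_ge0 // ltW.
  move=> t; have [i0 hi0] := @exists_big R k hk (p t) (proj2 (p_simplex t)).
  exact: (@inner_lb R k (gam t) (p t) n xs i0 (gam_simplex t) (p_simplex t) hi0).
- set m := (xs j0).-1.
  apply: (@le_lt_trans _ _ ((2 ^+ m.+1 * m`!%:R * k%:R)%:E * pi0 setT)%E).
    apply: outer_ub; first by rewrite !mulr_ge0 ?exprn_ge0 ?ler0n.
    move=> t; apply/andP; split.
      apply: integral_ge0 => x; rewrite /= in_itv /= andbT => x0.
      by rewrite lee_fin mulr_ge0 ?lik_ge0 ?invr_ge0 // ltW.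
    exact: (@inner_ub R k (gam t) (p t) n xs j0 m (gam_simplex t) (p_simplex t) hx).
  by rewrite probability_setT mule1 ltry.
Qed.
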